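(* Let $X'\in\lambda\mathrm{Der}(\mathcal{B})[[\lambda]]$ be such that $\exp(X')\phi_0'(\mathcal{A}'[[\lambda]])\subseteq C$. Then (i) the map $\exp(X')\phi_0':\mathcal{A}'[[\lambda]]\to C$ is a ring isomorphism; (ii) there is a unique Poisson structure $\pi'$ on $\mathcal{A}'[[\lambda]]$ such that $\Phi'=\exp(X')\phi_0':(\mathcal{A}'[[\lambda]],\pi')\to(\mathcal{B}[[\lambda]],\sigma)$ is a Poisson morphism.
   Context: $\mathbb{K}$ is a field of characteristic zero. $\mathcal{A},\mathcal{B}$ are commutative $\mathbb{K}$-algebras with Poisson brackets $\pi_0=\{\cdot,\cdot\}_{\mathcal{A}}$, $\sigma_0=\{\cdot,\cdot\}_{\mathcal{B}}$, and $\phi_0:\mathcal{A}\to\mathcal{B}$ is a Poisson morphism. $\pi$ and $\sigma$ are formal Poisson deformations of $\pi_0,\sigma_0$ (i.e. $\mathbb{K}[[\lambda]]$-bilinear Poisson brackets on $\mathcal{A}[[\lambda]]$, $\mathcal{B}[[\lambda]]$ with zeroth-order terms $\pi_0,\sigma_0$), and $\Phi:(\mathcal{A}[[\lambda]],\pi)\to(\mathcal{B}[[\lambda]],\sigma)$ is a $\mathbb{K}[[\lambda]]$-linear Poisson morphism (of commutative algebras and brackets) with zeroth-order term $\phi_0$. $\mathcal{A}'=\{b\in\mathcal{B}:\{b,\phi_0(a)\}_{\mathcal{B}}=0\ \forall a\in\mathcal{A}\}$ is the Poisson commutant, with its induced bracket $\pi_0'$, and $\phi_0':\mathcal{A}'\to\mathcal{B}$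 is the inclusion (extended $\lambda$-linearly). $C=\{b\in\mathcal{B}[[\lambda]]:\sigma(b,\Phi(a))=0\ \forall a\in\mathcal{A}[[\lambda]]\}$. For $X'\in\lambda\mathrm{Der}(\mathcal{B})[[\lambda]]$, $\exp(X')=\sum_n(X')^n/n!$. *)

(* Defs.v *)
(* Formal power series V[[lambda]] are coefficient sequences nat -> V. *)
From HB Require Import structures.
From mathcomp Require Import all_boot all_order all_algebra.
Set Implicit Arguments. Unset Strict Implicit. Unset Printing Implicit Defensive.
Import Order.TTheory GRing.Theory Num.Theory.
Local Open Scope ring_scope.

Definition series (V : Type) := nat -> V.

Section Series.
Variable K : fieldType.
Variable B : comAlgType K.

Definition sconst (a : B) : series B := fun n => if n is 0 then a else 0.
Definition szero : series B := fun _ => 0.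
Definition sone : series B := sconst 1.
Definition sadd (f g : series B) : series B := fun n => f n + g n.
Definition sopp (f : series B) : series B := fun n => - f n.
Definition smul (f g : series B) : series B :=
  fun n => \sum_(i < n.+1) f i * g (n - i)%N.
Definition sscal (c : series K) (f : series B) : series B :=
  fun n => \sum_(i < n.+1) c i *: f (n - i)%N.

(* K[[lambda]]-bilinear Poisson bracket on the subset P of B[[lambda]]
   (P is a K[[lambda]]-subalgebra; br is only required to be defined on P) *)
Definition spoisson (P : series B -> Prop)
    (br : series B -> series B -> series B) : Prop :=
  [/\ (forall f g, P f -> P g -> P (br f g)),
      (forall c f g h, P f -> P g -> P h ->
          br (sadd (sscal c f) g) h = sadd (sscal c (br f h)) (br g h)),
      (forall f g, P f -> P g -> br f g = sopp (br g f)),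
      (forall f g h, P f -> P g -> P h ->
          sadd (sadd (br f (br g h)) (br g (br h f))) (br h (br f g)) = szero)
    & (forall f g h, P f -> P g -> P h ->
          br f (smul g h) = sadd (smul (br f g) h) (smul g (br f h)))].

(* a derivation series X' = sum_k lambda^k X_k acting on B[[lambda]] *)
Definition sder (X : nat -> B -> B) (f : series B) : series B :=
  fun n => \sum_(k < n.+1) X k (f (n - k)%N).

(* exp(X') = sum_n X'^n / n!; since X_0 = 0, X'^n f has order >= n,
   so the m-th coefficient only involves n <= m *)
Definition sexp (X : nat -> B -> B) (f : series B) : series B :=
  fun m => \sum_(n < m.+1) (n`!%:R)^-1 *: (iter n (sder X) f m).

End Series.

Definition poisson (K : fieldType) (A : comAlgType K) (br : A -> A -> A) : Prop :=
  [/\ (forall (c : K) x y z, br (c *: x + y) z = c *: br x z + br y z),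
      (forall x y, br x y = - br y x),
      (forall x y z, br x (br y z) + br y (br z x) + br z (br x y) = 0)
    & (forall x y z, br x (y * z) = br x y * z + y * br x z)].

Definition is_derivation (K : fieldType) (B : comAlgType K) (D : B -> B) : Prop :=
  (forall (c : K) x y, D (c *: x + y) = c *: D x + D y) /\
  (forall x y, D (x * y) = D x * y + x * D y).

Definition commutant (K : fieldType) (A B : comAlgType K)
    (sigma0 : B -> B -> B) (phi0 : A -> B) (b : B) : Prop :=
  forall a : A, sigma0 b (phi0 a) = 0.

(* A'[[lambda]], seen inside B[[lambda]] via phi0' (the inclusion) *)
Definition commutant_series (K : fieldType) (A B : comAlgType K)
    (sigma0 : B -> B -> B) (phi0 : A -> B) (f : series B) : Prop :=
  forall n, commutant sigma0 phi0 (f n).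

Definition deformed_commutant (K : fieldType) (A B : comAlgType K)
    (sigma : series B -> series B -> series B) (Phi : series A -> series B)
    (h : series B) : Prop :=
  forall g : series A, sigma h (Phi g) = szero B.

(* Main.v *)
Set Warnings "-notation-overridden,-ambiguous-paths".
Require Import Defs.
From HB Require Import structures.
From mathcomp Require Import all_boot all_order all_algebra.
From mathcomp Require Import zify ring.
From Stdlib Require Import FunctionalExtensionality ClassicalEpsilon.
Import GRing.Theory.
Local Open Scope ring_scope.

Lemma tri_sum (V : zmodType) N (G : nat -> nat -> V) :
  (forall k l, (N <= k + l)%N -> G k l = 0) ->
  \sum_(n < N) \sum_(i < n.+1) G i (n - i)%N = \sum_(k < N) \sum_(l < N) G k l.
Proof.
move=> hG.
transitivity (\sum_(n < N) \sum_(k < N | (k <= n)%N) G k (n - k)%N).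
  apply: eq_bigr => n _.
  by rewrite (big_ord_widen N (fun i => G i (n - i)%N)) ?ltn_ord.
under eq_bigr do rewrite big_mkcond. rewrite exchange_big /=; apply: eq_bigr => k _. rewrite -big_mkcond /=.
rewrite -(big_mkord (fun n => (k <= n)%N) (fun n => G k (n - k)%N)).
rewrite (@big_cat_nat _ _ _ k 0 N) ?(ltnW (ltn_ord k)) //=.
rewrite big_nat_cond big1 ?add0r; last by move=> i /andP[/andP[_ h1] h2]; rewrite leqNgt h1 in h2.
rewrite -{1}[k : nat]add0n big_addn.
under eq_bigr do rewrite addnK.
rewrite (eq_bigl xpredT); last by move=> i; rewrite leq_addl.
rewrite big_mkord (big_ord_widen N (G k)) ?leq_subr // big_mkcond /=.
apply: eq_bigr => l _; case: ltnP => // h.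
by rewrite hG //; move: h (ltn_ord k); lia.
Qed.

Section Exp.
Variable K : fieldType.
Variable B : comAlgType K.
Variable X : nat -> B -> B.
Hypothesis hX0 : forall b, X 0%N b = 0.
Hypothesis hXder : forall k, is_derivation (X k).
Hypothesis hK : [pchar K] =i pred0.

Lemma X_add k x y : X k (x + y) = X k x + X k y.
Proof. by have [h _] := hXder k; rewrite -[x]scale1r h !scale1r. Qed.

Lemma X0 k : X k 0 = 0.
Proof. by apply: (addIr (X k 0)); rewrite add0r -X_add addr0. Qed.

Lemma X_scale k (c : K) x : X k (c *: x) = c *: X k x.
Proof. by have [h _] := hXder k; rewrite -[c *: x]addr0 h X0 addr0. Qed.

Lemma X_mul k x y : X k (x * y) = X k x * y + x * X k y.
Proof. by have [_ h] := hXder k; apply: h. Qed.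

Lemma X_sum k (I : Type) (r : seq I) (P : pred I) (F : I -> B) :
  X k (\sum_(i <- r | P i) F i) = \sum_(i <- r | P i) X k (F i).
Proof. exact: (big_morph (X k) (X_add k) (X0 k)). Qed.

Lemma X_one k : X k 1 = 0.
Proof.
have := X_mul k 1 1; rewrite !mulr1 !mul1r => h.
by apply: (addrI (X k 1)); rewrite addr0 -h.
Qed.

Lemma X_alg k (c : K) : X k (c%:A) = 0.
Proof. by rewrite X_scale X_one scaler0. Qed.

Lemma iter_val n v f : (forall j, (j < v)%N -> f j = 0) ->
  forall j, (j < v + n)%N -> iter n (sder X) f j = 0.
Proof.
move=> hf; elim: n => [|n IH] j hj /=; first by apply: hf; rewrite addn0 in hj.
rewrite /sder big1 // => -[k hk] _ /=.
case: k hk => [|k] hk; first by rewrite hX0.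
rewrite IH ?X0 //.
rewrite addnS ltnS in hj.
lia.
Qed.


Definition Dp N (p : {poly B}) : {poly B} := \sum_(k < N) 'X^k * map_poly (X k) p.

Lemma coef_mapX k (p : {poly B}) i : (map_poly (X k) p)`_i = X k p`_i.
Proof. exact: coef_map_id0 (X0 k). Qed.

Lemma coefDp N p m : (m < N)%N -> (Dp N p)`_m = \sum_(k < m.+1) X k p`_(m - k).
Proof.
move=> hm; rewrite /Dp coef_sum.
rewrite (big_ord_widen N (fun k => X k p`_(m - k))) // [RHS]big_mkcond /=.
apply: eq_bigr => k _; rewrite coefXnM coef_mapX ltnS.
by case: ltnP.
Qed.

Lemma map_add k (p q : {poly B}) : map_poly (X k) (p + q) = map_poly (X k) p + map_poly (X k) q.
Proof. by apply/polyP => i; rewrite coefD !coef_mapX coefD X_add. Qed.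

Lemma map_mul k (p q : {poly B}) :
  map_poly (X k) (p * q) = map_poly (X k) p * q + p * map_poly (X k) q.
Proof.
apply/polyP => i; rewrite coefD !coefM coef_mapX coefM X_sum -big_split.
by apply: eq_bigr => j _; rewrite X_mul !coef_mapX.
Qed.

Lemma Dp_add N p q : Dp N (p + q) = Dp N p + Dp N q.
Proof. by rewrite /Dp -big_split; apply: eq_bigr => k _; rewrite map_add mulrDr. Qed.

Lemma Dp0 N : Dp N 0 = 0.
Proof. by apply: (addIr (Dp N 0)); rewrite add0r -Dp_add addr0. Qed.

Lemma Dp_sum N (I : Type) (r : seq I) (P : pred I) (F : I -> {poly B}) :
  Dp N (\sum_(i <- r | P i) F i) = \sum_(i <- r | P i) Dp N (F i).
Proof. exact: (big_morph (Dp N) (Dp_add N) (Dp0 N)). Qed.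

Lemma Dp_natmul N p c : Dp N (p *+ c) = Dp N p *+ c.
Proof. by elim: c => [|c IH]; rewrite ?mulr0n ?Dp0 // !mulrS Dp_add IH. Qed.

Lemma Dp_mul N p q : Dp N (p * q) = Dp N p * q + p * Dp N q.
Proof.
rewrite /Dp mulr_suml mulr_sumr -big_split; apply: eq_bigr => k _.
by rewrite map_mul mulrDr mulrA [_ * (p * _)]mulrCA.
Qed.

Lemma Dp_alg N M (c : nat -> K) : Dp N (\poly_(i < M) (c i)%:A) = 0.
Proof.
rewrite /Dp big1 // => k _.
suff -> : map_poly (X k) (\poly_(i < M) (c i)%:A) = 0 by rewrite mulr0.
apply/polyP => i; rewrite coef_mapX coef_poly coef0.
by case: ifP => _; rewrite ?X_alg ?X0.
Qed.

Lemma iter_Dp_add N n p q : iter n (Dp N) (p + q) = iter n (Dp N) p + iter n (Dp N) q.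
Proof. by elim: n => [|n IH] //=; rewrite IH Dp_add. Qed.

Lemma iter_Dp_alg N n M (c : nat -> K) p :
  iter n (Dp N) (\poly_(i < M) (c i)%:A * p) = \poly_(i < M) (c i)%:A * iter n (Dp N) p.
Proof. by elim: n => [|n IH] //=; rewrite IH Dp_mul Dp_alg mul0r add0r. Qed.

Lemma iter_Dp_mul N n p q : iter n (Dp N) (p * q) =
  \sum_(i < n.+1) (iter i (Dp N) p * iter (n - i) (Dp N) q) *+ 'C(n, i).
Proof.
elim: n => [|n IHn]; first by rewrite big_ord1 /= mulr1n.
rewrite iterS IHn Dp_sum.
under eq_bigr do rewrite Dp_natmul Dp_mul mulrnDl.
rewrite big_split /=.
rewrite [RHS]big_ord_recl /= bin0.
rewrite [X in _ = _ + X](eq_bigr (fun i : 'I_n.+1 =>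
   (iter i.+1 (Dp N) p * iter (n - i) (Dp N) q) *+ 'C(n, i) +
   (iter i.+1 (Dp N) p * iter (n - i) (Dp N) q) *+ 'C(n, i.+1))); last first.
  by move=> i _; rewrite /bump /= add0n add1n subSS binS mulrnDr addrC.
rewrite big_split /= addrCA; congr (_ + _).
rewrite big_ord_recl /= bin0 [X in _ = _ + X]big_ord_recr /= bin_small // mulr0n addr0.
rewrite subn0; congr (_ + _); apply: eq_bigr => i _.
rewrite /bump /= add0n add1n; congr (_ * _ *+ _).
by rewrite -iterS subnSK.
Qed.

Lemma iter_coef N f (p : {poly B}) : (forall j, (j < N)%N -> f j = p`_j) ->
  forall n m, (m < N)%N -> iter n (sder X) f m = (iter n (Dp N) p)`_m.
Proof.
move=> hf; elim=> [|n IH] m hm /=; first exact: hf.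
rewrite coefDp //; apply: eq_bigr => k _; rewrite IH //.
exact: leq_ltn_trans (leq_subr _ _) hm.
Qed.

Definition fa (n : nat) : K := (n`!%:R)^-1.
Definition Ep N (p : {poly B}) := \sum_(n < N) (fa n)%:A *: iter n (Dp N) p.

Lemma sexp_Ep N f (p : {poly B}) m : (forall j, (j < N)%N -> f j = p`_j) -> (m < N)%N ->
  sexp X f m = (Ep N p)`_m.
Proof.
move=> hf hm; rewrite /sexp /Ep coef_sum.
under [RHS]eq_bigr do rewrite coefZ mulr_algl -(@iter_coef N f p hf _ _ hm).
rewrite (big_ord_widen N (fun n => fa n *: iter n (sder X) f m)) // big_mkcond /=.
apply: eq_bigr => n _; case: ltnP => // h.
by rewrite (@iter_val n 0 f) ?scaler0.
Qed.

Lemma iter_Dp_val N (p : {poly B}) n j : (j < N)%N -> (j < n)%N -> (iter n (Dp N) p)`_j = 0.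
Proof.
move=> hj hn; rewrite -(@iter_coef N (fun i => p`_i) p (fun _ _ => erefl) n j hj).
by rewrite (@iter_val n 0).
Qed.

Lemma algM (a b : K) : (a * b)%:A = a%:A * b%:A :> B.
Proof. by rewrite mulr_algl scalerA. Qed.


Lemma fact_neq0 n : (n`!%:R : K) != 0.
Proof. by have /pcharf0P -> := hK; rewrite -lt0n fact_gt0. Qed.

Lemma fa_bin n i : (i <= n)%N -> fa n *+ 'C(n, i) = fa i * fa (n - i).
Proof.
move=> h; rewrite /fa -mulr_natr -(bin_fact h) !natrM.
have h1 := fact_neq0 i; have h2 := fact_neq0 (n - i).
have h3 : ('C(n, i)%:R : K) != 0 by have /pcharf0P -> := hK; rewrite -lt0n bin_gt0.
by field; rewrite h1 h2 h3.
Qed.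

Lemma T_val N (p q : {poly B}) k l m : (m < N)%N -> (m < k + l)%N ->
  (iter k (Dp N) p * iter l (Dp N) q)`_m = 0.
Proof.
move=> hm hkl; rewrite coefM big1 // => -[i hi] _ /=.
case: (ltnP i k) => h1.
  by rewrite iter_Dp_val ?mul0r //; apply: leq_ltn_trans hm; rewrite -ltnS.
by rewrite (@iter_Dp_val N q l) ?mulr0 //; [apply: leq_ltn_trans (leq_subr _ _) hm | lia].
Qed.

Lemma Ep_mul_coef N (p q : {poly B}) m : (m < N)%N ->
  (Ep N (p * q))`_m = (Ep N p * Ep N q)`_m.
Proof.
move=> hm.
pose G k l := (fa k)%:A * (fa l)%:A * (iter k (Dp N) p * iter l (Dp N) q)`_m.
transitivity (\sum_(n < N) \sum_(i < n.+1) G i (n - i)%N).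
  rewrite /Ep coef_sum; apply: eq_bigr => n _.
  rewrite coefZ iter_Dp_mul coef_sum mulr_sumr; apply: eq_bigr => i _.
  have hi : (i <= n)%N by rewrite -ltnS.
  by rewrite coefMn mulrnAr -mulrnAl scalerMnl fa_bin // algM /G.
rewrite tri_sum; last first.
  by move=> k l h; rewrite /G T_val ?mulr0 //; apply: leq_trans h.
rewrite /Ep mulr_suml coef_sum; apply: eq_bigr => k _.
rewrite mulr_sumr coef_sum; apply: eq_bigr => l _.
by rewrite -[in RHS]scalerAl -[in RHS]scalerAr !coefZ /G mulrA.
Qed.

Definition tr N (f : series B) : {poly B} := \poly_(i < N) f i.

Lemma coef_tr N f j : (j < N)%N -> (tr N f)`_j = f j.
Proof. by move=> h; rewrite /tr coef_poly h. Qed.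

Lemma sexp_mul f g : sexp X (smul f g) = smul (sexp X f) (sexp X g).
Proof.
apply: functional_extensionality => m.
have hN : (m < m.+1)%N by [].
rewrite (@sexp_Ep m.+1 _ (tr m.+1 f * tr m.+1 g)) //; last first.
  move=> j hj; rewrite coefM /smul; apply: eq_bigr => -[i hi] _ /=.
  rewrite !coef_tr //; first exact: leq_ltn_trans (leq_subr _ _) hj.
  exact: leq_trans hi hj.
rewrite Ep_mul_coef // coefM /smul; apply: eq_bigr => -[i hi] _ /=.
rewrite -(@sexp_Ep m.+1 f) -?(@sexp_Ep m.+1 g) //.
- by move=> j hj; rewrite coef_tr.
- by rewrite ltnS leq_subr.
- by move=> j hj; rewrite coef_tr.
Qed.

Lemma Ep_lin N (c : nat -> K) p q :
  Ep N (\poly_(i < N) (c i)%:A * p + q) = \poly_(i < N) (c i)%:A * Ep N p + Ep N q.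
Proof.
rewrite /Ep mulr_sumr -big_split; apply: eq_bigr => n _.
by rewrite iter_Dp_add iter_Dp_alg scalerDr scalerAr.
Qed.

Lemma sexp_lin (c : series K) f g :
  sexp X (sadd (sscal c f) g) = sadd (sscal c (sexp X f)) (sexp X g).
Proof.
apply: functional_extensionality => m.
have hN : (m < m.+1)%N by [].
rewrite (@sexp_Ep m.+1 _ (\poly_(i < m.+1) (c i)%:A * tr m.+1 f + tr m.+1 g)) //; last first.
  move=> j hj; rewrite coefD coefM /sadd /sscal coef_tr //; congr (_ + _).
  apply: eq_bigr => -[i hi] _ /=.
  rewrite coef_poly coef_tr ?(leq_trans hi hj) ?mulr_algl //.
  exact: leq_ltn_trans (leq_subr _ _) hj.
rewrite Ep_lin // coefD coefM /sadd /sscal -(@sexp_Ep m.+1 g) //; last first.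
  by move=> j hj; rewrite coef_tr.
congr (_ + _); apply: eq_bigr => -[i hi] _ /=.
rewrite coef_poly hi mulr_algl -(@sexp_Ep m.+1 f) //.
- by move=> j hj; rewrite coef_tr.
- by rewrite ltnS leq_subr.
Qed.

Lemma fa0 : fa 0 = 1.
Proof. by rewrite /fa invr1. Qed.

Lemma sexp_triang v d : (forall j, (j < v)%N -> d j = 0) ->
  (forall j, (j < v)%N -> sexp X d j = 0) /\ sexp X d v = d v.
Proof.
move=> hd; split.
  move=> j hj; rewrite /sexp big1 // => n _.
  by rewrite (@iter_val n v d) ?scaler0 //; apply: leq_trans hj (leq_addr _ _).
rewrite /sexp big_ord_recl big1 ?addr0; last first.
  by move=> i _; rewrite (@iter_val _ v d) ?scaler0 // addnS ltnS leq_addr.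
by rewrite /= ?fact0 ?invr1 scale1r.
Qed.

Definition kconst (c : K) : series K := fun i => if i is 0%N then c else 0.

Lemma sscal_const (c : K) (f : series B) : sscal (kconst c) f = fun j => c *: f j.
Proof.
apply: functional_extensionality => j.
by rewrite /sscal big_ord_recl /= subn0 big1 ?addr0 // => i _; rewrite scale0r.
Qed.

Lemma sexp_inj f g : sexp X f = sexp X g -> f = g.
Proof.
move=> H.
pose d := sadd (sscal (kconst (-1)) g) f.
have hd : forall j, sexp X d j = 0.
  move=> j; rewrite /d sexp_lin sscal_const /sadd H.
  by rewrite scaleN1r addNr.
have hd2 : forall m j, (j < m)%N -> d j = 0.
  elim=> [|m IH] j hj //.
  rewrite ltnS leq_eqVlt in hj; case/orP: hj => [/eqP -> | hj]; last exact: IH.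
  by rewrite -(@sexp_triang m d IH).2 hd.
apply: functional_extensionality => j.
have := hd2 j.+1 j (ltnSn j).
by rewrite /d sscal_const /sadd scaleN1r addrC => /eqP; rewrite subr_eq0 => /eqP.
Qed.

Lemma sexp_loc m f g : (forall j, (j <= m)%N -> f j = g j) -> sexp X f m = sexp X g m.
Proof.
move=> h.
rewrite (@sexp_Ep m.+1 f (tr m.+1 g)) ?(@sexp_Ep m.+1 g (tr m.+1 g)) //.
- by move=> j hj; rewrite coef_tr.
- by move=> j hj; rewrite coef_tr // h.
Qed.

Fixpoint Qs (h : series B) (m : nat) : {poly B} :=
  if m is m'.+1 then
    Qs h m' + (h m' - sexp X (fun i => (Qs h m')`_i) m')%:P * 'X^m'
  else 0.

Lemma Qs_coef h m j : (Qs h m.+1)`_j = (Qs h m)`_j + (if j == m then h m - sexp X (fun i => (Qs h m)`_i) m else 0).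
Proof. by rewrite /= coefD coefCM coefXn; case: eqP => _; rewrite ?mulr1 ?mulr0. Qed.

Lemma Qs_stable h m m' j : (j < m)%N -> (m <= m')%N -> (Qs h m')`_j = (Qs h m)`_j.
Proof.
move=> hj; elim: m' => [|m' IH] hm; first by move: hm; rewrite leqn0 => /eqP ->.
rewrite leq_eqVlt in hm; case/orP: hm => [/eqP -> // | hm].
rewrite Qs_coef IH // ifF ?addr0 //.
by apply/eqP => e; move: hj hm; rewrite e; lia.
Qed.

Lemma Qs_spec h m j : (j < m)%N -> sexp X (fun i => (Qs h m)`_i) j = h j.
Proof.
elim: m j => [|m IH] j hj //.
rewrite ltnS leq_eqVlt in hj; case/orP: hj => [/eqP -> | hj].
  pose e := fun i => if i == m then h m - sexp X (fun i => (Qs h m)`_i) m else 0.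
  have -> : (fun i => (Qs h m.+1)`_i) = sadd (sscal (kconst 1) (fun i => (Qs h m)`_i)) e.
    apply: functional_extensionality => i.
    by rewrite sscal_const /sadd scale1r Qs_coef.
  rewrite sexp_lin /sadd sscal_const scale1r.
  have he : forall i, (i < m)%N -> e i = 0.
    by move=> i hi; rewrite /e ifF //; apply/negbTE; rewrite neq_ltn hi.
  have [_ ->] := @sexp_triang m e he.
  by rewrite /e eqxx addrC subrK.
rewrite -(IH j hj); apply: sexp_loc => i hi.
by rewrite (@Qs_stable h m m.+1) //; apply: leq_ltn_trans hi hj.
Qed.

Lemma sexp_surj h : exists f, sexp X f = h.
Proof.
exists (fun m => (Qs h m.+1)`_m); apply: functional_extensionality => m.
rewrite -(@Qs_spec h m.+1 m) //; apply: sexp_loc => j hj.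
by rewrite (@Qs_stable h j.+1 m.+1).
Qed.

Lemma sexp_one : sexp X (sone B) = sone B.
Proof.
apply: functional_extensionality => m.
rewrite (@sexp_Ep m.+1 _ 1) //; last first.
  by move=> j _; rewrite coef1 /sone /sconst; case: j.
have D1 : Dp m.+1 1 = 0.
  have := Dp_mul m.+1 1 1; rewrite !mulr1 !mul1r => h.
  by apply: (addrI (Dp m.+1 1)); rewrite addr0 -h.
have I1 : forall n, iter n.+1 (Dp m.+1) 1 = 0.
  elim=> [|n IH]; first exact: D1.
  by rewrite iterS IH Dp0.
rewrite /Ep big_ord_recl /= fa0 scale1r big1 ?addr0.
  by rewrite ?scale1r coef1 /sone /sconst; clear D1 I1; case: m.
by move=> i _; rewrite add0n -iterS I1 scaler0.
Qed.

End Exp.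

Theorem proposition3p9
  (K : fieldType) (hK : [pchar K] =i pred0)
  (A B : comAlgType K)
  (pi0 : A -> A -> A) (sigma0 : B -> B -> B)
  (hpi0 : poisson pi0) (hsigma0 : poisson sigma0)
  (phi0 : {lrmorphism A -> B})
  (hphi0 : forall x y, phi0 (pi0 x y) = sigma0 (phi0 x) (phi0 y))
  (pi : series A -> series A -> series A)
  (sigma : series B -> series B -> series B)
  (hpi : spoisson (fun _ => True) pi)
  (hpi_0 : forall a b, pi (sconst a) (sconst b) 0%N = pi0 a b)
  (hsigma : spoisson (fun _ => True) sigma)
  (hsigma_0 : forall a b, sigma (sconst a) (sconst b) 0%N = sigma0 a b)
  (Phi : series A -> series B)
  (hPhi_lin : forall (c : series K) f g,
      Phi (sadd (sscal c f) g) = sadd (sscal c (Phi f)) (Phi g))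
  (hPhi_mul : forall f g, Phi (smul f g) = smul (Phi f) (Phi g))
  (hPhi_one : Phi (sone A) = sone B)
  (hPhi_br : forall f g, Phi (pi f g) = sigma (Phi f) (Phi g))
  (hPhi_0 : forall a, Phi (sconst a) 0%N = phi0 a)
  (X : nat -> B -> B)
  (hX0 : forall b, X 0%N b = 0)
  (hXder : forall k, is_derivation (X k))
  (hexp : forall f : series B, commutant_series sigma0 phi0 f ->
      deformed_commutant sigma Phi (sexp X f)) :
  let A'ser := commutant_series sigma0 phi0 in
  let C := deformed_commutant sigma Phi in
  let Phi' := sexp X in
  (* (i) Phi' : A'[[lambda]] -> C is a ring isomorphism *)
  ((forall f g, A'ser f -> A'ser g -> Phi' (sadd f g) = sadd (Phi' f) (Phi' g)) /\
   (forall f g, A'ser f -> A'ser g -> Phi' (smul f g) = smul (Phi' f) (Phi' g)) /\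
   Phi' (sone B) = sone B /\
   (forall f g, A'ser f -> A'ser g -> Phi' f = Phi' g -> f = g) /\
   (forall h, C h -> exists2 f, A'ser f & Phi' f = h))
  /\
  (* (ii) unique Poisson structure pi' on A'[[lambda]] making Phi' a Poisson morphism *)
  (exists pi' : series B -> series B -> series B,
     (spoisson A'ser pi' /\
      (forall (c : series K) f g, A'ser f -> A'ser g ->
          Phi' (sadd (sscal c f) g) = sadd (sscal c (Phi' f)) (Phi' g)) /\
      (forall f g, A'ser f -> A'ser g -> Phi' (pi' f g) = sigma (Phi' f) (Phi' g))) /\
     (forall pi'' : series B -> series B -> series B,
        spoisson A'ser pi'' ->
        (forall f g, A'ser f -> A'ser g -> Phi' (pi'' f g) = sigma (Phi' f) (Phi' g)) ->
        forall f g, A'ser f -> A'ser g -> pi'' f g = pi' f g)).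

Proof.
move=> A's C Phi'.
have Emul := @sexp_mul K B X hX0 hXder hK.
have Elin := @sexp_lin K B X hX0 hXder.
have Einj := @sexp_inj K B X hX0 hXder.
have Esurj := @sexp_surj K B X hX0 hXder.
have Eone := @sexp_one K B X hX0 hXder.
have Etri := @sexp_triang K B X hX0 hXder.
have Esc := @sscal_const K B.
have fe := @functional_extensionality nat B.
have sadd1 : forall f g : series B, sadd (sscal (kconst K 1) f) g = sadd f g.
  by move=> f g; rewrite Esc; apply: fe => j; rewrite /sadd scale1r.
have Eadd : forall f g, sexp X (sadd f g) = sadd (sexp X f) (sexp X g).
  by move=> f g; rewrite -sadd1 Elin sadd1.
have Ezero : sexp X (szero B) = szero B.
  by apply: fe => j; exact: ((Etri j.+1 (szero B) (fun _ _ => erefl)).1 j (ltnSn j)).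
have negadd : forall x : series B, sadd (sscal (kconst K (-1)) x) x = szero B.
  by move=> x; rewrite Esc; apply: fe => j; rewrite /sadd scaleN1r addNr.
have soppE : forall x : series B, sopp x = sadd (sscal (kconst K (-1)) x) (szero B).
  by move=> x; rewrite Esc; apply: fe => j; rewrite /sadd /sopp scaleN1r addr0.
have sopp0 : sopp (szero B) = szero B by apply: fe => j; rewrite /sopp oppr0.
have Eopp : forall x, sexp X (sopp x) = sopp (sexp X x).
  by move=> x; rewrite soppE Elin Ezero -soppE.
case: hsigma => _ slin santi sjac sleib.
have sig0l : forall h, sigma (szero B) h = szero B.
  move=> h; rewrite -{1}(negadd (szero B)).
  by rewrite (slin (kconst K (-1)) (szero B) (szero B) h I I I) negadd.
have sig0r : forall h, sigma h (szero B) = szero B.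
  by move=> h; rewrite santi // sig0l sopp0.
have sscal0 : forall c, sscal c (szero B) = szero B.
  by move=> c; apply: fe => j; rewrite /sscal big1 // => i _; rewrite scaler0.
have Clin : forall c x y, C x -> C y -> C (sadd (sscal c x) y).
  move=> c x y hx hy g; rewrite slin // hx hy sscal0.
  by apply: fe => j; rewrite /sadd addr0.
have Cbr : forall x y, C x -> C y -> C (sigma x y).
  move=> x y hx hy g.
  have J := sjac x y (Phi g) I I I.
  rewrite (hy g) sig0r (santi (Phi g) x) // (hx g) sopp0 sig0r in J.
  have J' : sigma (Phi g) (sigma x y) = szero B.
    apply: fe => j; have := congr1 (fun s => s j) J.
    by rewrite /sadd /szero !add0r.
  by rewrite santi // J' sopp0.
case: hsigma0 => s0lin s0anti _ s0leib.
have s00 : forall z, sigma0 0 z = 0.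
  move=> z; have := s0lin (-1) 1 1 z.
  by rewrite scaleN1r addNr => ->; rewrite scaleN1r addNr.
have comm0 : commutant sigma0 phi0 0 by move=> a; rewrite s00.
have commlin : forall (c : K) x y, commutant sigma0 phi0 x -> commutant sigma0 phi0 y ->
    commutant sigma0 phi0 (c *: x + y).
  by move=> c x y hx hy a; rewrite s0lin hx hy scaler0 addr0.
have commadd : forall x y, commutant sigma0 phi0 x -> commutant sigma0 phi0 y ->
    commutant sigma0 phi0 (x + y).
  by move=> x y hx hy; rewrite -[x]scale1r; apply: commlin.
have commsc : forall (c : K) x, commutant sigma0 phi0 x -> commutant sigma0 phi0 (c *: x).
  by move=> c x hx; rewrite -[c *: x]addr0; apply: commlin.
have commmul : forall x y, commutant sigma0 phi0 x -> commutant sigma0 phi0 y ->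
    commutant sigma0 phi0 (x * y).
  move=> x y hx hy a; rewrite s0anti s0leib.
  by rewrite (s0anti _ x) (s0anti _ y) hx hy !oppr0 mulr0 mul0r addr0 oppr0.
have Alin : forall c f g, A's f -> A's g -> A's (sadd (sscal c f) g).
  move=> c f g hf hg j; rewrite /sadd /sscal; apply: (commadd) => //.
  apply: (big_ind (commutant sigma0 phi0)); [exact: comm0 | exact: commadd |].
  by move=> i _; apply: commsc.
have Amul : forall f g, A's f -> A's g -> A's (smul f g).
  move=> f g hf hg j; rewrite /smul.
  apply: (big_ind (commutant sigma0 phi0)); [exact: comm0 | exact: commadd |].
  by move=> i _; apply: commmul.
pose lam : series K := fun i => if i == 1%N then 1 else 0.
have lam0 : forall s : series B, sscal lam s 0%N = 0.
  by move=> s; rewrite /sscal big_ord1 /lam /= scale0r.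
have lamS : forall (s : series B) j, sscal lam s j.+1 = s j.
  move=> s j; rewrite /sscal big_ord_recl big_ord_recl /= /lam /= scale0r add0r scale1r.
  rewrite big1 ?addr0 ?subn1 // => i _; rewrite /bump /=.
  by rewrite scale0r.
have decomp : forall v : series B, v = sadd (sscal lam (fun j => v j.+1)) (sconst (v 0%N)).
  move=> v; apply: fe => -[|j]; rewrite /sadd.
    by rewrite lam0 add0r.
  by rewrite lamS /sconst addr0.
have sigl0 : forall x y, sigma x y 0%N = sigma (sconst (x 0%N)) y 0%N.
  move=> x y; rewrite {1}(decomp x) slin //.
  by rewrite /sadd lam0 add0r.
have sig00 : forall x y, sigma x y 0%N = sigma0 (x 0%N) (y 0%N).
  move=> x y; rewrite sigl0 santi // /sopp sigl0 hsigma_0.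
  by rewrite s0anti opprK.
have sconst0 : sconst (0 : B) = szero B by apply: fe => -[|j].
have siglead : forall n (v w : series B), (forall j, (j < n)%N -> v j = 0) ->
    sigma v w n = sigma0 (v n) (w 0%N).
  elim=> [|n IH] v w hv; first exact: sig00.
  rewrite {1}(decomp v) slin // (hv 0%N) // sconst0 sig0l /sadd lamS /szero addr0.
  rewrite IH // => j hj; exact: hv.
have surjC : forall h, C h -> exists2 f, A's f & Phi' f = h.
  move=> h hC; have [f hf] := Esurj h; exists f => //.
  suff H : forall n j, (j < n)%N -> commutant sigma0 phi0 (f j).
    by move=> j; apply: (H j.+1).
  elim=> [|n IH] j // hj.
  rewrite ltnS leq_eqVlt in hj; case/orP: hj => [/eqP -> | hj]; last exact: IH.
  pose g : series B := fun j => if (j < n)%N then f j else 0.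
  have Ag : A's g by move=> i; rewrite /g; case: ifP => // /IH.
  pose d := sadd (sscal (kconst K (-1)) g) f.
  have hd : forall i, (i < n)%N -> d i = 0.
    by move=> i hi; rewrite /d Esc /sadd /g hi scaleN1r addNr.
  have hdn : d n = f n by rewrite /d Esc /sadd /g ltnn scaler0 add0r.
  have Cd : C (sexp X d).
    rewrite /d Elin hf; apply: Clin => //; exact: hexp.
  have [hd1 hd2] := Etri n d hd.
  move=> a; have := congr1 (fun s => s n) (Cd (sconst a)).
  rewrite siglead // hd2 hdn hPhi_0 => H; exact: H.
split.
  split; first by move=> f g _ _; rewrite /Phi' Eadd.
  split; first by move=> f g _ _; rewrite /Phi' Emul.
  split; first exact: Eone.
  split; first by move=> f g _ _; apply: Einj.
  exact: surjC.
pose pi' := fun f g : series B => epsilon (inhabits (szero B))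
  (fun x => A's x /\ sexp X x = sigma (sexp X f) (sexp X g)).
have spec : forall f g, A's f -> A's g ->
    A's (pi' f g) /\ sexp X (pi' f g) = sigma (sexp X f) (sexp X g).
  move=> f g hf hg; apply: (epsilon_spec (inhabits (szero B))
    (fun x => A's x /\ sexp X x = sigma (sexp X f) (sexp X g))).
  have [x hx ex] := surjC _ (Cbr _ _ (hexp f hf) (hexp g hg)).
  by exists x.
have Aopp : forall f, A's f -> A's (sopp f).
  move=> f hf; rewrite soppE; apply: Alin => // j; exact: comm0.
exists pi'; split.
  split; last first.
    split; first by move=> c f g _ _; exact: Elin.
    by move=> f g hf hg; exact: (spec f g hf hg).2.
  split.
  - by move=> f g hf hg; exact: (spec f g hf hg).1.
  - move=> c f g h hf hg hh; apply: Einj.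
    rewrite (spec _ _ (Alin _ _ _ hf hg) hh).2 Elin slin //.
    by rewrite Elin (spec _ _ hf hh).2 (spec _ _ hg hh).2.
  - move=> f g hf hg; apply: Einj.
    by rewrite Eopp (spec _ _ hf hg).2 (spec _ _ hg hf).2 santi.
  - move=> f g h hf hg hh; apply: Einj.
    have [a1 e1] := spec _ _ hg hh; have [a2 e2] := spec _ _ hh hf.
    have [a3 e3] := spec _ _ hf hg.
    rewrite !Eadd (spec _ _ hf a1).2 (spec _ _ hg a2).2 (spec _ _ hh a3).2.
    by rewrite e1 e2 e3 sjac // Ezero.
  - move=> f g h hf hg hh; apply: Einj.
    rewrite (spec _ _ hf (Amul _ _ hg hh)).2 Emul sleib //.
    by rewrite Eadd !Emul (spec _ _ hf hg).2 (spec _ _ hf hh).2.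
move=> pi'' _ hpi'' f g hf hg; apply: Einj.
by move: (hpi'' f g hf hg); rewrite /Phi' => ->; rewrite (spec _ _ hf hg).2.
Qed.
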